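(* Let $q\in(0,1/2)$ and $\gamma\in[0,1]$. If $q''>q$ (intermittent selfish mining is more profitable than honest mining), then $q''<q'$ (selfish mining is more profitable than intermittent selfish mining).
   Context: Here $p=1-q$, and $$\delta=\frac{(1+pq)(p-q)+pq}{p^2q+p-q},\qquad q'=\frac{((1+pq)(p-q)+pq)q-(1-\gamma)p^2q(p-q)}{p^2q+p-q},\qquad q''=\frac{q+q'}{\delta+1/\delta}.$$ These are respectively the mean difficulty parameter, the apparent hashrate of selfish mining, and the apparent hashrate of intermittent selfish mining. A strategy is more profitable than another when its apparent hashrate (long-run revenue ratio divided by $b/\tau_0$) is larger. Honest mining has apparent hashrate $q$. *)

(* Defs.v *)
From Stdlib Require Import Reals.
Open Scope R_scope.

Definition pp (q : R) : R := 1 - q.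

Definition delta (q : R) : R :=
  let p := pp q in
  ((1 + p*q)*(p - q) + p*q) / (p^2*q + p - q).

(* apparent hashrate of selfish mining q' *)
Definition q1 (q gamma : R) : R :=
  let p := pp q in
  (((1 + p*q)*(p - q) + p*q)*q - (1 - gamma)*p^2*q*(p - q)) / (p^2*q + p - q).

(* apparent hashrate of intermittent selfish mining q'' *)
Definition q2 (q gamma : R) : R :=
  (q + q1 q gamma) / (delta q + / delta q).

(* Main.v *)
Require Import Defs.
From Stdlib Require Import Reals Lra Psatz.
Open Scope R_scope.

Lemma delta_pos q : 0 < q < 1/2 -> 0 < delta q.
Proof.
  intros [h1 h2]. unfold delta, pp.
  apply Rdiv_lt_0_compat; nra.
Qed.

Theorem mainTheorem9 (q gamma : R) :
  0 < q < 1/2 -> 0 <= gamma <= 1 ->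
  q2 q gamma > q -> q2 q gamma < q1 q gamma.
Proof.
  intros hq hg.
  pose proof (delta_pos q hq) as hd.
  unfold q2. generalize (q1 q gamma) as x. intro x.
  set (D := delta q) in *.
  assert (hs : 2 <= D + / D).
  { assert (D * (D + / D) = D*D + 1) by (field; apply Rgt_not_eq; exact hd).
    assert (0 < / D) by (apply Rinv_0_lt_compat; lra).
    assert (2*D <= D*(D + / D)) by (rewrite H; pose proof (pow2_ge_0 (D-1)); simpl in *; lra).
    apply (Rmult_le_reg_l D); lra. }
  set (s := D + / D) in *.
  intros h.
  assert (hs0 : 0 < s) by lra.
  apply Rlt_gt in h.
  apply Rlt_gt.
  assert (e : (q + x) / s * s = q + x) by (field; lra).
  assert (q * s < q + x).
  { apply Rgt_lt in h. apply (Rmult_lt_compat_r s) in h; [|exact hs0]. rewrite e in h. exact h. }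
  apply (Rmult_lt_reg_r s); [lra|]. rewrite e. assert (q < x) by nra. assert (x <= (s-1)*x) by nra. nra.
Qed.
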